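(* Let $X$ be a finite set with $|X|\ge 3$ and $T\in B(X)$. (M1) If $\mathcal T$ is a minimal triplet cover for $T$, then $2\le\mu(\mathcal T)\le 5$. (M2) If $\mathcal T$ is a minimum triplet cover for $T$, then $2\le\mu(\mathcal T)\le 3$.
   Context: A binary phylogenetic $X$-tree is an unrooted tree whose leaf set is $X$ and all of whose non-leaf vertices are unlabelled of degree three; $B(X)$ is the set of such trees. Pairs in $\binom{X}{2}$ are written $ab$, triples $abc$. Given $\mathcal T\subseteq\binom{X}{2}$, a triple $abc$ supports an interior vertex $v$ if $a,b,c$ lie one in each of the three components of $T$ minus $v$ and $ab,ac,bc\in\mathcal T$; $\mathcal T$ is a triplet cover for $T$ if every interior vertex is supported by some triple. A triplet cover is minimal if removing any single pair from it yields a set that is not a triplet cover for $T$, and minimum if no triplet cover for $T$ has smaller cardinality. The multiplicity $\mu_{\mathcal T}(x)$ of $x\in X$ is the number of elements of $\mathcal T$ containing $x$, and $\mu(\mathcal T)=\min\{\mu_{\mathcal T}(x):x\in X\}$. *)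

(* Defs.v *)
From mathcomp Require Import all_boot.
Set Implicit Arguments. Unset Strict Implicit. Unset Printing Implicit Defensive.

(* A binary phylogenetic X-tree is represented as a graph on the vertex type
   V := X + I, where the leaves are the vertices [inl x] (x : X) and the
   unlabelled interior vertices are the [inr i] (i : I). *)
Section Defs.
Variables (X I : finType).
Notation V := (X + I)%type.
Variable e : rel V.

Definition deg (v : V) : nat := #|[set w | e v w]|.

Definition acyclic : Prop :=
  ~ exists c : seq V, [/\ 3 <= size c, uniq c & cycle e c].

Definition binary_phylo_tree : Prop :=
  [/\ symmetric e, irreflexive e,
      (forall u v : V, connect e u v) & acyclic] /\
  ((forall x : X, deg (inl x) = 1) /\ (forall i : I, deg (inr i) = 3)).

Definition conn_minus (v : V) : rel V :=
  connect (fun a b => [&& e a b, a != v & b != v]).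

Definition separates (v : V) (a b c : X) : Prop :=
  [/\ ~~ conn_minus v (inl a) (inl b), ~~ conn_minus v (inl a) (inl c)
    & ~~ conn_minus v (inl b) (inl c)].

Definition supports (Tc : {set {set X}}) (a b c : X) (v : V) : Prop :=
  [/\ separates v a b c,
      [set a; b] \in Tc, [set a; c] \in Tc & [set b; c] \in Tc].

Definition triplet_cover (Tc : {set {set X}}) : Prop :=
  (forall p, p \in Tc -> #|p| = 2) /\
  (forall i : I, exists a b c, supports Tc a b c (inr i)).

Definition minimal_triplet_cover (Tc : {set {set X}}) : Prop :=
  triplet_cover Tc /\ (forall p, p \in Tc -> ~ triplet_cover (Tc :\ p)).

Definition minimum_triplet_cover (Tc : {set {set X}}) : Prop :=
  triplet_cover Tc /\ (forall Tc', triplet_cover Tc' -> #|Tc| <= #|Tc'|).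

End Defs.

Definition mult (X : finType) (Tc : {set {set X}}) (x : X) : nat :=
  #|[set p in Tc | x \in p]|.

(* mu(Tc) = min_x mult Tc x  (X nonempty); lo <= mu(Tc) <= hi unfolds to: *)
Definition mu_between (X : finType) (Tc : {set {set X}}) (lo hi : nat) : Prop :=
  (forall x : X, lo <= mult Tc x) /\ (exists x : X, mult Tc x <= hi).

(* Main.v *)
Require Import Defs.
From mathcomp Require Import all_boot zify.
Set Implicit Arguments. Unset Strict Implicit. Unset Printing Implicit Defensive.

Definition rm (T : finType) (f : rel T) (u : T) : rel T :=
  fun a b => [&& f a b, a != u & b != u].

Lemma rm_sym (T : finType) (f : rel T) u : symmetric f -> symmetric (rm f u).
Proof. by move=> fs a b; rewrite /rm fs; case: (a != u); case: (b != u); rewrite ?andbF ?andbT. Qed.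

Lemma sub_conn (T : finType) (f g : rel T) : subrel f g -> subrel (connect f) (connect g).
Proof. by move=> H; apply: connect_sub => a b /H; apply: connect1. Qed.

Lemma conn_end (T : finType) (f : rel T) u a : connect (rm f u) a u -> a = u.
Proof.
move/connectP=> [p]; elim: p a => [|b p IH] a /=; first by move=> _ ->.
case/andP=> /and3P[_ _ bu] pp lst; have := IH b pp lst.
by move=> E; rewrite E eqxx in bu.
Qed.

Lemma first_hit (T : finType) (f : rel T) u z :
  connect f z u -> z != u -> exists2 w, f w u & connect (rm f u) z w.
Proof.
move/connectP=> [p]; elim: p z => [|b p IH] z /=; first by move=> _ -> ; rewrite eqxx.
case/andP=> fzb pp lst zu.
case: (eqVneq b u) => [bu|bu].
  by exists z; [rewrite -bu | apply: connect0].
have [w fw cw] := IH b pp lst bu.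
exists w => //; apply: connect_trans cw; apply: connect1.
by rewrite /rm fzb zu bu.
Qed.

Lemma avoid (T : finType) (g : rel T) w x y :
  connect g x y -> ~~ connect g w y -> connect (rm g w) x y.
Proof.
move/connectP=> [p]; elim: p x => [|b p IH] x /=; first by move=> _ -> _; apply: connect0.
case/andP=> gxb pp lst nw.
have cb : connect g b y by apply/connectP; exists p.
have cx : connect g x y by apply: connect_trans (connect1 gxb) cb.
apply: connect_trans (IH b pp lst nw); apply: connect1.
rewrite /rm gxb /=; apply/andP; split.
  by apply: contraNneq nw => xw; rewrite -xw.
by apply: contraNneq nw => xw; rewrite -xw.
Qed.

Lemma path_avoid (T : finType) (f : rel T) u x p : path (rm f u) x p -> u \notin p.
Proof.
elim: p x => [|b p IH] x //=; case/andP=> /and3P[_ _ bu] pp.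
by rewrite inE negb_or eq_sym bu (IH b pp).
Qed.

Section Tree.
Variables (X I : finType) (e : rel (X + I)%type).
Hypothesis esym : symmetric e.
Hypothesis eirr : irreflexive e.
Hypothesis econn : forall u v, connect e u v.
Hypothesis eacyc : acyclic e.
Local Notation V := (X + I)%type.
Local Notation cm := (conn_minus e).

Lemma cmE v a b : cm v a b = connect (rm e v) a b.
Proof. by []. Qed.

Lemma cm_sym v a b : cm v a b = cm v b a.
Proof. by rewrite !cmE; apply: sym_connect_sym; apply: rm_sym. Qed.

Lemma cm_trans v a b c : cm v a b -> cm v b c -> cm v a c.
Proof. rewrite !cmE; exact: connect_trans. Qed.

Lemma cm_refl v a : cm v a a.
Proof. exact: connect0. Qed.

Lemma cm_edge v a b : e a b -> a != v -> b != v -> cm v a b.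
Proof. by move=> eab av bv; rewrite cmE; apply: connect1; rewrite /rm eab av bv. Qed.

Lemma cm_end v a : cm v a v -> a = v.
Proof. rewrite cmE; exact: conn_end. Qed.

Lemma cyc u w1 w2 : e u w1 -> e u w2 -> w1 != w2 -> ~~ cm u w1 w2.
Proof.
move=> e1 e2 w12; apply/negP; rewrite cmE => /connectP[p pp].
case: (shortenP pp) => p' pp' up' _ lst.
apply: eacyc; exists [:: u, w1 & p']; split.
- case: p' pp' up' lst => [|a p'] //= _ _ lst.
  by rewrite lst eqxx in w12.
- rewrite (cons_uniq u) up' andbT inE negb_or (path_avoid pp') andbT.
  by apply/eqP => E; rewrite E eirr in e1.
- rewrite /= e1 rcons_path -lst esym e2 andbT.
  by apply: sub_path pp' => a b /and3P[].
Qed.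

Lemma nbr_comp v z : z != v -> exists2 w, e v w & cm v z w.
Proof.
move=> zv; have [w ewv cw] := first_hit (econn z v) zv.
by exists w; [rewrite esym | rewrite cmE].
Qed.

Variable r : X.
Local Notation rr := (@inl X I r).

Definition par u w := e u w && cm u rr w.

Lemma par_r w : par rr w = false.
Proof.
apply/negP => /andP[ew]; rewrite cm_sym => /cm_end E.
by rewrite E eirr in ew.
Qed.

Lemma par_neq u w : par u w -> u != rr.
Proof. by apply: contraTneq => ->; rewrite par_r. Qed.

Lemma par_ex u : u != rr -> exists w, par u w.
Proof.
move=> ur; have [w ewv cw] := first_hit (econn rr u) (ltac:(by rewrite eq_sym) : rr != u).
by exists w; rewrite /par esym ewv cmE.
Qed.

Lemma par_uniq u w1 w2 : par u w1 -> par u w2 -> w1 = w2.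
Proof.
case/andP=> e1 c1 /andP[e2 c2]; case: (eqVneq w1 w2) => // ne.
have := cyc e1 e2 ne; rewrite (cm_trans (_ : cm u w1 rr) c2) //.
by rewrite cm_sym.
Qed.

Lemma par_excl a b : par a b -> par b a -> False.
Proof.
move=> hab; have ar := par_neq hab; case/andP=> eba cba.
have ra : rr != a by rewrite eq_sym.
have [w /and3P[ewa wb _] cw] := first_hit (cba : connect (rm e b) rr a) ra.
have cw' : cm a rr w.
  by rewrite cmE; apply: sub_conn cw => x y /and3P[/and3P[? ? ?] ? ?]; rewrite /rm; apply/and3P.
case/andP: hab => eab cab.
have := cyc (_ : e a w) eab wb; rewrite esym => /(_ ewa).
by rewrite (cm_trans (_ : cm a w rr) cab) // cm_sym.
Qed.

Lemma par_cover a b : e a b -> par a b || par b a.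
Proof.
move=> eab; case: (eqVneq a rr) eab => [->|ar] eab.
  by rewrite par_r /par esym eab cm_refl.
case: (eqVneq b rr) eab => [->|br] eab.
  by rewrite /par eab cm_refl.
have [p hp] := par_ex ar; case: (eqVneq p b) => [<-|pb]; first by rewrite hp.
apply/orP; right; case/andP: (hp) => eap cap.
rewrite /par esym eab /=.
have nb : ~~ connect (rm e a) b p by apply: cyc; rewrite // eq_sym.
have := avoid cap nb => c.
have c' : cm b rr p.
  by rewrite cmE; apply: sub_conn c => x y /and3P[/and3P[? ? ?] ? ?]; rewrite /rm; apply/and3P.
apply: cm_trans c' _; apply: cm_edge => //; first by rewrite esym.
by apply/eqP => E; rewrite E eirr in eab.
Qed.

Lemma deg_par v : deg e v = (v != rr) + #|[set w | par w v]|.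
Proof.
rewrite /deg.
have -> : [set w | e v w] = [set w | par v w] :|: [set w | par w v].
  apply/setP => w; rewrite !inE; apply/idP/idP => [/par_cover //|].
  by case/orP=> /andP[h _] //; rewrite esym.
rewrite cardsU (_ : _ :&: _ = set0) ?cards0 ?subn0; last first.
  apply/setP => w; rewrite !inE; case: (boolP (par v w)) => // h1.
  by apply/negP => h2; exact: par_excl h1 h2.
congr (_ + _); case: (eqVneq v rr) => [->|vr].
  by rewrite (_ : [set w | par rr w] = set0) ?cards0 //; apply/setP => w; rewrite !inE par_r.
have [w0 pw0] := par_ex vr.
rewrite (_ : [set w | par v w] = [set w0]) ?cards1 //; apply/setP => w; rewrite !inE.
by apply/idP/eqP => [h|->//]; exact: par_uniq h pw0.
Qed.

Lemma sum_children : \sum_(v : V) #|[set w | par w v]| = (#|X| + #|I|).-1.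
Proof.
under eq_bigr => v _ do rewrite -sum1dep_card.
rewrite (exchange_big_dep (fun w => w != rr)); last by move=> v w _ /par_neq.
rewrite /= -card_sum -(cardsC1 rr) -sum1dep_card; apply: eq_big => [w|w wr]; first by rewrite !inE.
rewrite sum1dep_card; have [w0 pw0] := par_ex wr.
rewrite (_ : [set x | par w x] = [set w0]) ?cards1 //; apply/setP => x; rewrite !inE.
by apply/idP/eqP => [h|->//]; exact: par_uniq h pw0.
Qed.

Lemma sum_deg : \sum_(v : V) deg e v = 2 * (#|X| + #|I|).-1.
Proof.
under eq_bigr => v _ do rewrite deg_par.
rewrite big_split /= sum_children mul2n -addnn; congr (_ + _).
rewrite -card_sum -(cardsC1 rr) -sum1dep_card [RHS]big_mkcond /=.
by apply: eq_bigr => v _; rewrite !inE; case: (v != rr).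
Qed.

End Tree.

Lemma closed_conn (T : finType) (f : rel T) (A : pred T) a b :
  (forall u w, A u -> f u w -> A w) -> connect f a b -> A a -> A b.
Proof.
move=> cl /connectP[p]; elim: p a => [|c p IH] a /=; first by move=> _ ->.
by case/andP=> fac pp lst Aa; apply: (IH c pp lst); apply: cl fac.
Qed.

Lemma mult2 (X : finType) (Tc : {set {set X}}) (x y z : X) :
  [set x; y] \in Tc -> [set x; z] \in Tc -> y != z -> 2 <= mult Tc x.
Proof.
move=> hy hz yz.
have ne : [set x; y] != [set x; z].
  apply/negP => /eqP E.
  have : y \in [set x; z] by rewrite -E !inE eqxx orbT.
  rewrite !inE => /orP[/eqP yx | /eqP yz']; last by rewrite yz' eqxx in yz.
  have : z \in [set x; y] by rewrite E !inE eqxx orbT.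
  rewrite !inE => /orP[/eqP zx | /eqP zy]; last by rewrite zy eqxx in yz.
  by rewrite yx zx eqxx in yz.
have : [set [set x; y]; [set x; z]] \subset [set p in Tc | x \in p].
  by apply/subsetP => p; rewrite !inE => /orP[]/eqP->; rewrite ?hy ?hz !inE eqxx.
by move/subset_leq_card; rewrite cards2 ne /mult.
Qed.

Lemma sum_mult (X : finType) (Tc : {set {set X}}) :
  (forall p, p \in Tc -> #|p| = 2) -> \sum_(x : X) mult Tc x = 2 * #|Tc|.
Proof.
move=> h2; rewrite /mult.
under eq_bigr => x _ do rewrite -sum1dep_card.
rewrite (exchange_big_dep (fun p => p \in Tc)) /=; last by move=> x p _ /andP[].
rewrite (eq_bigr (fun _ => 2)) => [|p pT]; first by rewrite sum_nat_const mulnC.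
rewrite sum1dep_card -(h2 p pT); apply: eq_card => x; by rewrite !inE pT.
Qed.

Section Tree2.
Variables (X I : finType) (e : rel (X + I)%type).
Hypothesis esym : symmetric e.
Hypothesis eirr : irreflexive e.
Hypothesis econn : forall u v, connect e u v.
Hypothesis eacyc : acyclic e.
Hypothesis dleaf : forall x : X, deg e (inl x) = 1.
Hypothesis dint : forall i : I, deg e (inr i) = 3.
Local Notation V := (X + I)%type.
Local Notation cm := (conn_minus e).

Lemma sepl v w1 w2 x y : e v w1 -> e v w2 -> w1 != w2 -> cm v x w1 -> cm v y w2 ->
  ~~ cm v x y.
Proof.
move=> e1 e2 ne c1 c2; apply/negP => cxy; move: (cyc esym eirr eacyc e1 e2 ne).
rewrite (cm_trans (_ : cm v w1 x) (cm_trans cxy c2)) //.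
by rewrite (cm_sym esym).
Qed.

Lemma leaf_exists v w : e v w -> exists x : X, cm v w (inl x).
Proof.
move=> evw; move: {2}#|[set z | cm v w z]| (leqnn #|[set z | cm v w z]|) => n.
elim: n v w evw => [|n IH] v w evw Hn.
  by move: Hn; rewrite (cardsD1 w) inE cm_refl.
case: w evw Hn => [x|i] evw Hn; first by exists x; apply: cm_refl.
move: evw Hn; set w := inr i => evw Hn.
have wv : w != v by apply/eqP => E; rewrite E eirr in evw.
have : 0 < #|[set z | e w z] :\ v|.
  rewrite /w; have := dint i; rewrite /deg (cardsD1 v) inE esym evw /= add1n.
  by case=> ->.
case/card_gt0P => w' /setD1P[w'v ew'].
rewrite inE in ew'.
have sub : [set z | cm w w' z] \subset [set z | cm v w z].
  apply/subsetP => z; rewrite !inE => cz.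
  have nz : ~~ connect (rm e w) v z.
    have ewv : e w v by rewrite esym.
    have vw' : v != w' by rewrite eq_sym.
    apply/negP => cvz; have := cyc esym eirr eacyc ewv ew' vw'.
    by rewrite (cm_trans (cvz : cm w v z) (_ : cm w z w')) // (cm_sym esym).
  have c1 := avoid (cz : connect (rm e w) w' z) nz.
  have c2 : cm v w' z.
    by rewrite cmE; apply: sub_conn c1 => a b /and3P[/and3P[? ? ?] ? ?]; rewrite /rm; apply/and3P.
  apply: cm_trans c2; apply: cm_edge => //.
have lt : #|[set z | cm w w' z]| < #|[set z | cm v w z]|.
  apply: proper_card; apply/properP; split => //; exists w; first by rewrite inE cm_refl.
  rewrite inE; apply/negP => /cm_end E.
  by move: ew'; rewrite E eirr.
have [x hx] := IH w w' ew' (leq_trans (ltnSE (leq_trans lt Hn)) (leqnn _)).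
exists x; have : inl x \in [set z | cm w w' z] by rewrite inE.
by move/(subsetP sub); rewrite inE.
Qed.

Lemma sep3 (r : X) (i : I) : exists a b : X,
  [&& ~~ cm (inr i) (inl r) (inl a), ~~ cm (inr i) (inl r) (inl b)
    & ~~ cm (inr i) (inl a) (inl b)].
Proof.
have vr : inr i != inl r :> V by [].
have [p /andP[evp crp]] := par_ex esym econn vr.
have : #|[set z | e (inr i) z] :\ p| == 2.
  by have := dint i; rewrite /deg (cardsD1 p) inE evp /= add1n; case=> ->.
case/cards2P => c1 [c2 [c12 E]].
have : c1 \in [set z | e (inr i) z] :\ p by rewrite E !inE eqxx.
case/setD1P => c1p; rewrite inE => e1.
have : c2 \in [set z | e (inr i) z] :\ p by rewrite E !inE eqxx orbT.
case/setD1P => c2p; rewrite inE => e2.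
have [a ha] := leaf_exists e1; have [b hb] := leaf_exists e2.
rewrite (cm_sym esym) in ha; rewrite (cm_sym esym) in hb.
exists a, b; rewrite (sepl evp e1 _ crp ha) ?(sepl evp e2 _ crp hb) ?(sepl e1 e2 c12 ha hb) //.
  by rewrite eq_sym.
by rewrite eq_sym.
Qed.

Lemma leaf_comp (x : X) v z : [set w | e (inl x) w] = [set v] -> cm v z (inl x) -> z = inl x.
Proof.
move=> N; rewrite (cm_sym esym) cmE => /connectP[[|b p]] /=; first by move=> _ ->.
case/andP=> /and3P[exb _ bv] _ _.
have : b \in [set w | e (inl x) w] by rewrite inE.
by rewrite N inE (negbTE bv).
Qed.

Lemma leaf_nbr (x : X) : 3 <= #|X| -> exists i : I, [set w | e (inl x) w] = [set inr i].
Proof.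
move=> hX; have := dleaf x; rewrite /deg => /eqP /cards1P [[y|i] N]; last by exists i.
exfalso.
have exy : e (inl x) (inl y).
  have : inl y \in [set w | e (inl x) w] by rewrite N inE.
  by rewrite inE.
have := dleaf y; rewrite /deg => /eqP /cards1P [w' N'].
have : inl x \in [set w | e (inl y) w] by rewrite inE esym.
rewrite N' inE => /eqP Ew'; subst w'.
have : ~~ ([set: X] \subset [set x; y]).
  apply/negP => /subset_leq_card; rewrite cardsT cards2 => h.
  by move: (leq_trans hX h); case: (x != y).
case/subsetPn => z _; rewrite !inE negb_or => /andP[zx zy].
pose A := [pred u : V | (u == inl x) || (u == inl y)].
have cl : forall u w, A u -> e u w -> A w.
  move=> u w /= /orP[/eqP-> | /eqP->] euw.
    have : w \in [set w | e (inl x) w] by rewrite inE.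
    by rewrite N inE => ->; rewrite orbT.
  have : w \in [set w | e (inl y) w] by rewrite inE.
  by rewrite N' inE => ->.
have := closed_conn cl (econn (inl x) (inl z)); rewrite /A /= eqxx => /(_ isT).
by case/orP => /eqP [] E; subst z; rewrite ?eqxx in zx zy.
Qed.

Lemma lower (Tc : {set {set X}}) : 3 <= #|X| -> triplet_cover e Tc ->
  forall x, 2 <= mult Tc x.
Proof.
move=> hX [_ cov] x; have [i N] := leaf_nbr x hX.
have [a [b [c [[sab sac sbc] pab pac pbc]]]] := cov i.
have dst : forall u w : X, ~~ cm (inr i) (inl u) (inl w) -> u != w.
  by move=> u w h; apply: contraNneq h => ->; apply: cm_refl.
case: (eqVneq a x) => [<-|ax]; first exact: (mult2 pab pac (dst _ _ sbc)).
case: (eqVneq b x) => [<-|bx].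
  by rewrite setUC in pab; exact: (mult2 pab pbc (dst _ _ sac)).
case: (eqVneq c x) => [<-|cx].
  by rewrite setUC in pac; rewrite setUC in pbc; exact: (mult2 pac pbc (dst _ _ sab)).
exfalso.
have nb : forall u : X, u != x -> exists2 w, w \in [set z | e (inr i) z] :\ inl x &
    cm (inr i) (inl u) w.
  move=> u ux; have [w ew cw] := nbr_comp esym econn (ltac:(by []) : inl u != inr i :> V).
  exists w => //; rewrite !inE ew andbT; apply/negP => /eqP E.
  move: cw; rewrite E => /(leaf_comp N) [] /eqP; by rewrite (negbTE ux).
have [wa ha ca] := nb a ax; have [wb hb cb] := nb b bx; have [wc hc cc] := nb c cx.
have nd : forall u w wu ww, cm (inr i) (inl u) wu -> cm (inr i) (inl w) ww ->
    ~~ cm (inr i) (inl u) (inl w) -> wu != ww.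
  move=> u w wu ww cu cw h; apply: contraNneq h => E.
  by apply: cm_trans cu _; rewrite E (cm_sym esym).
have dab := nd _ _ _ _ ca cb sab; have dac := nd _ _ _ _ ca cc sac.
have dbc := nd _ _ _ _ cb cc sbc.
have : [set wa; wb; wc] \subset [set z | e (inr i) z] :\ inl x.
  apply/subsetP => w; rewrite !inE => /orP[/orP[]|] /eqP->.
  - by move: ha; rewrite !inE.
  - by move: hb; rewrite !inE.
  - by move: hc; rewrite !inE.
move/subset_leq_card.
have ex : inl x \in [set z | e (inr i) z].
  have : inr i \in [set w | e (inl x) w] by rewrite N inE.
  by rewrite !inE esym.
have := dint i; rewrite /deg (cardsD1 (inl x)) ex add1n => [[->]].
rewrite (_ : [set wa; wb; wc] = wa |: (wb |: [set wc])); last first.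
  by apply/setP => w; rewrite !inE orbA.
by rewrite !cardsU1 !inE cards1 negb_or dab dac dbc.
Qed.

Lemma cardI (r : X) : #|I| + 2 = #|X|.
Proof.
have := sum_deg esym eirr econn eacyc r.
rewrite big_sumType /=.
under eq_bigr => x _ do rewrite dleaf.
under [X in _ + X = _]eq_bigr => i _ do rewrite dint.
rewrite !sum_nat_const !cardT /= -!cardT => h.
have : 0 < #|X| by apply/card_gt0P; exists r.
move: h; set n := #|X|; set m := #|I|.
case: n => // n; rewrite addSn /= => h _.
lia.
Qed.

Lemma cover_mono (A B : {set {set X}}) : triplet_cover e A -> A \subset B ->
  (forall p, p \in B -> #|p| = 2) -> triplet_cover e B.
Proof.
move=> [_ cov] sub h2; split => // i; have [a [b [c [s p1 p2 p3]]]] := cov i.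
by exists a, b, c; split => //; apply: (subsetP sub).
Qed.

Lemma M1 (Tc : {set {set X}}) : 3 <= #|X| -> minimal_triplet_cover e Tc ->
  exists x, mult Tc x <= 5.
Proof.
move=> hX [[h2 cov] minl].
have [r _] : exists r : X, r \in X by apply/card_gt0P; apply: leq_trans hX.
pose sb (i : I) (t : X * X * X) := [&& ~~ cm (inr i) (inl t.1.1) (inl t.1.2),
  ~~ cm (inr i) (inl t.1.1) (inl t.2), ~~ cm (inr i) (inl t.1.2) (inl t.2),
  [set t.1.1; t.1.2] \in Tc, [set t.1.1; t.2] \in Tc & [set t.1.2; t.2] \in Tc].
pose f (q : I * 'I_3) : {set X} := if [pick t | sb q.1 t] is Some t then
  (if val q.2 == 0 then [set t.1.1; t.1.2] else if val q.2 == 1 then [set t.1.1; t.2]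
   else [set t.1.2; t.2]) else set0.
pose Tc' := [set f q | q : I * 'I_3].
have pk : forall i, exists t, [pick t | sb i t] = Some t /\ sb i t.
  move=> i; case: pickP => [t ht|none]; first by exists t.
  have [a [b [c [[s1 s2 s3] p1 p2 p3]]]] := cov i.
  by have := none (a, b, c); rewrite /sb /= s1 s2 s3 p1 p2 p3.
have sub : Tc' \subset Tc.
  apply/subsetP => p /imsetP [[i k] _ ->]; rewrite /f /=.
  have [t [-> /and3P[_ _ /and4P[_ q1 q2 q3]]]] := pk i.
  by case: ifP => _; [|case: ifP => _].
have cov' : triplet_cover e Tc'.
  split=> [p /(subsetP sub)|i]; first exact: h2.
  have [t [pt /and3P[s1 s2 /and4P[s3 _ _ _]]]] := pk i.
  exists t.1.1, t.1.2, t.2; split; first by split.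
  - by apply/imsetP; exists (i, @Ordinal 3 0 isT) => //; rewrite /f /= pt.
  - by apply/imsetP; exists (i, @Ordinal 3 1 isT) => //; rewrite /f /= pt.
  - by apply/imsetP; exists (i, @Ordinal 3 2 isT) => //; rewrite /f /= pt.
have eqT : Tc \subset Tc'.
  apply/subsetP => p pT; apply/negPn/negP => np; apply: (minl p pT).
  apply: cover_mono cov' _ _.
    apply/subsetP => q qT'; rewrite !inE (subsetP sub q qT') andbT.
    by apply: contraNneq np => <-.
  by move=> q; rewrite !inE => /andP[_]; exact: h2.
have cT : #|Tc| <= #|I| * 3.
  apply: leq_trans (subset_leq_card eqT) _.
  by apply: leq_trans (leq_imset_card _ _) _; rewrite card_prod card_ord.
case: (boolP [exists x, mult Tc x <= 5]) => [/existsP // | /existsPn H].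
exfalso; have := sum_mult h2.
have : \sum_(x : X) 6 <= \sum_(x : X) mult Tc x.
  by apply: leq_sum => x _; rewrite ltnNge H.
rewrite sum_nat_const cardT /= -cardT => h1 h3.
have := cardI r; rewrite h3 in h1.
move: h1 cT; set a := #|X|; set b := #|I|; set c := #|Tc|.
lia.
Qed.

Lemma M2 (Tc : {set {set X}}) : 3 <= #|X| -> minimum_triplet_cover e Tc ->
  exists x, mult Tc x <= 3.
Proof.
move=> hX [[h2 cov] mn].
have [r _] : exists r : X, r \in X by apply/card_gt0P; apply: leq_trans hX.
pose sb (i : I) (ab : X * X) := [&& ~~ cm (inr i) (inl r) (inl ab.1),
  ~~ cm (inr i) (inl r) (inl ab.2) & ~~ cm (inr i) (inl ab.1) (inl ab.2)].
pose g (i : I) : {set X} := if [pick ab | sb i ab] is Some ab then [set ab.1; ab.2] else set0.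
pose C0 := [set [set r; x] | x in [set x | x != r]] :|: [set g i | i : I].
have pk : forall i, exists ab, [pick ab | sb i ab] = Some ab /\ sb i ab.
  move=> i; case: pickP => [ab hab|none]; first by exists ab.
  have [a [b h]] := sep3 r i.
  by have := none (a, b); rewrite /sb /= h.
have dst : forall i (u w : X), ~~ cm (inr i) (inl u) (inl w) -> u != w.
  by move=> i u w h; apply: contraNneq h => ->; apply: cm_refl.
have cov0 : triplet_cover e C0.
  split=> [p|i].
    rewrite inE => /orP[/imsetP[x xr ->] | /imsetP[i _ ->]].
      by rewrite cards2; move: xr; rewrite inE eq_sym => ->.
    have [ab [pab /and3P[_ _ s3]]] := pk i.
    by rewrite /g pab cards2 (dst _ _ _ s3).
  have [ab [pab /and3P[s1 s2 s3]]] := pk i.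
  exists r, ab.1, ab.2; split; first by split.
  - rewrite inE; apply/orP; left; apply/imsetP; exists ab.1 => //.
    by rewrite inE eq_sym (dst _ _ _ s1).
  - rewrite inE; apply/orP; left; apply/imsetP; exists ab.2 => //.
    by rewrite inE eq_sym (dst _ _ _ s2).
  - by rewrite inE; apply/orP; right; apply/imsetP; exists i => //; rewrite /g pab.
have c1 := mn _ cov0.
have c2 : #|C0| <= #|X| + #|I|.
  rewrite cardsU; apply: leq_trans (leq_subr _ _) _; apply: leq_add.
    by apply: leq_trans (leq_imset_card _ _) (max_card _).
  exact: leq_imset_card.
case: (boolP [exists x, mult Tc x <= 3]) => [/existsP // | /existsPn H].
exfalso; have := sum_mult h2.
have : \sum_(x : X) 4 <= \sum_(x : X) mult Tc x.
  by apply: leq_sum => x _; rewrite ltnNge H.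
rewrite sum_nat_const cardT /= -cardT => h1 h3.
have := cardI r; rewrite h3 in h1.
move: h1 c1 c2; set a := #|X|; set b := #|I|; set c := #|Tc|; set d := #|C0|.
lia.
Qed.

End Tree2.

Unset Implicit Arguments.

Theorem proposition2 (X I : finType) (e : rel (X + I)%type) :
  3 <= #|X| -> binary_phylo_tree e ->
  (forall Tc : {set {set X}}, minimal_triplet_cover e Tc -> mu_between Tc 2 5) /\
  (forall Tc : {set {set X}}, minimum_triplet_cover e Tc -> mu_between Tc 2 3).
Proof.
move=> hX [[esym eirr econn eacyc] [dleaf dint]]; split=> Tc hT.
  split; first by move=> x; apply: lower => //; case: hT.
  by apply: M1.
split; first by move=> x; apply: lower => //; case: hT.
by apply: M2.
Qed.
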